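(* Let $n\geq 1$, $0\leq p\leq1$, and $1\leq k<n$. Then $$\Pr_p(PC^-_{[k]})=2^k\bigl(p^{2^n-2^{n-k}}-p^{2^n}\bigr),\qquad \Pr_p(NC^-_{[k]})=2^k\bigl((1-p)^{2^n-2^{n-k}}-(1-p)^{2^n}\bigr),$$ where $[k]=\{0,1,\dots,k-1\}$.
   Context: Boolean functions on $n$ variables are maps $f:\{0,1\}^n\to\{0,1\}$, variables indexed by $[n]=\{0,\dots,n-1\}$. The bias-$p$ probability measure on Boolean functions on $n$ variables is $\Pr_p(f)=p^{|f^{-1}\{1\}|}(1-p)^{|f^{-1}\{0\}|}$ (with $0^0=1$). For a nonempty $I\subseteq[n]$, $f$ is positively canalizing on $I$ if there is a function $\sigma:I\to\{0,1\}$ such that for all $x\in\{0,1\}^n$, if there exists $i\in I$ with $x_i\neq\sigma(i)$ then $f(x)=1$; negatively canalizing on $I$ is defined the same way with $f(x)=0$ in place of $f(x)=1$. $PC^-_I$ (resp. $NC^-_I$) is the set of nonconstant Boolean functions on $n$ variables that are positively (resp. negatively) canalizing on $I$. *)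

(* Defs.v *)
From HB Require Import structures.
From mathcomp Require Import all_boot all_order all_algebra.
Set Implicit Arguments. Unset Strict Implicit. Unset Printing Implicit Defensive.
Import Order.TTheory GRing.Theory Num.Theory.

Definition point (n : nat) := {ffun 'I_n -> bool}.
Definition boolfun (n : nat) := {ffun point n -> bool}.

Definition prob_fun (R : pzRingType) (p : R) (n : nat) (f : boolfun n) : R :=
  (p ^+ #|[set x | f x]| * (1 - p) ^+ #|[set x | ~~ f x]|)%R.

Definition Prp (R : pzRingType) (p : R) (n : nat) (S : {set boolfun n}) : R :=
  (\sum_(f in S) prob_fun p f)%R.

Definition nonconstant (n : nat) (f : boolfun n) : bool :=
  [exists x, exists y, f x != f y].

(* f is b-canalizing on I (b = true: positively, b = false: negatively):
   there is sigma (only its values on I matter) such that whenever some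
   i in I has x_i <> sigma(i), f x = b. *)
Definition canalizing_val (n : nat) (b : bool) (I : {set 'I_n}) (f : boolfun n) : bool :=
  [exists sigma : {ffun 'I_n -> bool},
    [forall x : point n, [exists i in I, x i != sigma i] ==> (f x == b)]].

Definition PCm (n : nat) (I : {set 'I_n}) : {set boolfun n} :=
  [set f | nonconstant f && canalizing_val true I f].
Definition NCm (n : nat) (I : {set 'I_n}) : {set boolfun n} :=
  [set f | nonconstant f && canalizing_val false I f].

Definition first_k (n k : nat) : {set 'I_n} := [set i : 'I_n | (i < k)%N].

(* Main.v *)
Require Import Defs.
From mathcomp Require Import all_boot all_order all_algebra.
Import Order.TTheory GRing.Theory Num.Theory.
Local Open Scope ring_scope.

Section S.
Variables (R : realFieldType) (p : R) (n k : nat).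
Hypotheses (k1 : (1 <= k)%N) (kn : (k < n)%N).

Definition wt (b : bool) : R := if b then p else 1 - p.

Lemma prob_funE (f : boolfun n) : prob_fun p f = \prod_x wt (f x).
Proof.
rewrite /prob_fun (bigID (fun x => f x)) /=; symmetry.
rewrite (eq_bigr (fun _ => p)); last by move=> x ->.
rewrite [X in _ * X](eq_bigr (fun _ => 1 - p)); last by move=> x /negbTE ->.
by rewrite !prodr_const !cardsE.
Qed.

Lemma prod_split (a b : nat) :
  (\prod_(i < n) (if (i < k)%N then a else b) = a ^ k * b ^ (n - k))%N.
Proof.
rewrite -(big_mkord xpredT (fun i => if (i < k)%N then a else b)).
rewrite (big_cat_nat (n:=k)) //=; last exact: ltnW.
rewrite (eq_big_nat _ _ (F2 := fun _ => a)); last by move=> i /andP[_ ->].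
rewrite [X in (_ * X)%N](eq_big_nat _ _ (F2 := fun _ => b)); last first.
  by move=> i /andP[H _]; rewrite ltnNge H.
by rewrite !prod_nat_const_nat subn0.
Qed.

Definition famQ (t : point n) (c1 c2 : bool) : 'I_n -> pred bool :=
  fun i => if (i < k)%N then (if c1 then pred1 (t i) else predT)
           else (if c2 then pred1 false else predT).

Lemma card_fam t c1 c2 :
  #|family (famQ t c1 c2)| = ((if c1 then 1 else 2) ^ k * (if c2 then 1 else 2) ^ (n - k))%N.
Proof.
rewrite -sum1_card.
rewrite (eq_bigr (fun f => \prod_(i : 'I_n) 1%N)); last by move=> *; rewrite big1.
rewrite -(bigA_distr_big_dep _ (fun _ _ => 1%N)) -prod_split.
apply: eq_bigr => i _; rewrite sum1_card /famQ.
case: ifP => _; [case: c1 | case: c2] => /=.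
- exact: card1.
- exact: card_bool.
- exact: card1.
- exact: card_bool.
Qed.

Definition C (t : point n) : {set point n} :=
  [set x : point n | [forall i : 'I_n, (i < k)%N ==> (x i == t i)]].
Definition T : {set point n} :=
  [set t : point n | [forall i : 'I_n, (k <= i)%N ==> ~~ t i]].


Variable b : bool.

Definition A (t : point n) : {set boolfun n} :=
  [set f : boolfun n | [forall x, (x \notin C t) ==> (f x == b)] && nonconstant f].

Definition S := [set f : boolfun n | nonconstant f && canalizing_val b (first_k n k) f].

Definition i0 : 'I_n := Ordinal (leq_ltn_trans (leq0n k) kn).

Lemma inC (t x : point n) : (x \in C t) = [forall i : 'I_n, (i < k)%N ==> (x i == t i)].
Proof. by rewrite inE. Qed.

Lemma notinC (t : point n) : [ffun i => ~~ t i] \notin C t.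
Proof.
rewrite inC; apply/forallP => /(_ i0) /implyP; rewrite /= k1 ffunE => /(_ isT).
by case: (t i0).
Qed.

Lemma AsubS t : A t \subset S.
Proof.
apply/subsetP => f; rewrite !inE => /andP[/forallP H ->] /=.
apply/existsP; exists t; apply/forallP => x; apply/implyP => /existsP[i /andP[Hi Hx]].
apply: (implyP (H x)); rewrite inC; apply/negP => /forallP /(_ i) /implyP.
by rewrite inE in Hi => /(_ Hi); apply/negP.
Qed.

Lemma Auniq t t' f : t \in T -> t' \in T -> f \in A t -> f \in A t' -> t = t'.
Proof.
rewrite !inE => /forallP Ht /forallP Ht' /andP[/forallP Hf Hnc] /andP[/forallP Hf' _].
apply/ffunP => i; apply/eqP/negPn/negP => Hne.
have ik : (i < k)%N.
  rewrite ltnNge; apply/negP => ki.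
  by move: Hne (implyP (Ht i) ki) (implyP (Ht' i) ki); case: (t i); case: (t' i).
have Hb : forall z, f z = b.
  move=> z; case Hz: (z \in C t).
    have Hz' : z \notin C t'.
      rewrite inC; apply/negP => /forallP /(_ i) /implyP /(_ ik) /eqP Ez.
      move: Hz; rewrite inC => /forallP /(_ i) /implyP /(_ ik) /eqP Ez2.
      by move: Hne; rewrite -Ez -Ez2 eqxx.
    by apply/eqP; apply: (implyP (Hf' z)).
  by apply/eqP; apply: (implyP (Hf z)); rewrite Hz.
by move: Hnc => /existsP[x /existsP[y]]; rewrite !Hb eqxx.
Qed.

Lemma Aexists (f : boolfun n) : f \in S -> exists2 t, t \in T & f \in A t.
Proof.
rewrite inE => /andP[Hnc /existsP[sigma /forallP H]].
exists [ffun i : 'I_n => (i < k)%N && sigma i].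
  rewrite inE; apply/forallP => i; apply/implyP => ki.
  by rewrite ffunE ltnNge ki.
rewrite inE Hnc andbT; apply/forallP => x; apply/implyP => Hx.
apply: (implyP (H x)).
move: Hx; rewrite inC negb_forall => /existsP[i].
rewrite negb_imply ffunE => /andP[ik Hi]; apply/existsP; exists i.
by rewrite inE ik; rewrite ik in Hi.
Qed.

Lemma sum_S (F : boolfun n -> R) :
  \sum_(f in S) F f = \sum_(t in T) \sum_(f in A t) F f.
Proof.
rewrite (eq_bigr (fun f => \sum_(t | (t \in T) && (f \in A t)) F f)); last first.
  move=> f fS; have [t0 Ht0 Hf0] := @Aexists f fS.
  rewrite (big_pred1 t0) // => t /=; apply/andP/eqP => [[Ht Hf]|->]; last by [].
  exact: (@Auniq t t0 f Ht Ht0 Hf Hf0).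
rewrite (exchange_big_dep (fun t => t \in T)) /=; last by move=> f t _ /andP[].
apply: eq_bigr => t tT; apply: eq_bigl => f; rewrite tT /=.
by case fA: (f \in A t); rewrite ?andbT ?andbF //; rewrite (subsetP (AsubS t)).
Qed.

Lemma sum_family (Q : point n -> pred bool) :
  \sum_(f in family Q) prob_fun p f = \prod_x \sum_(j | Q x j) wt j.
Proof.
transitivity (\sum_(f in family Q) \prod_x wt (f x)).
  by apply: eq_bigr => f _; exact: prob_funE.
by rewrite bigA_distr_big_dep.
Qed.

Lemma card_point : #|point n| = (2 ^ n)%N.
Proof. by rewrite card_ffun card_bool card_ord. Qed.

Lemma card_C t : #|C t| = (2 ^ (n - k))%N.
Proof.
have := card_fam t true false; rewrite /= exp1n mul1n => <-.
apply: eq_card => x; rewrite inC; apply/forallP/familyP => H i; move: (H i);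
  rewrite /famQ; case: ifP => ik; rewrite ?inE //=.
Qed.

Lemma card_T : #|T| = (2 ^ k)%N.
Proof.
have := card_fam [ffun => false] false true; rewrite /= exp1n muln1 => <-.
apply: eq_card => x; rewrite inE; apply/forallP/familyP => H i; move: (H i);
  rewrite /famQ; case: ifP => ik; rewrite ?inE //=; rewrite leqNgt ik //=.
by move=> Hx; apply/eqP; apply/negbTE.
by move/eqP => ->.
Qed.

Lemma sum_A t : \sum_(f in A t) prob_fun p f = wt b ^+ (2 ^ n - 2 ^ (n - k)) - wt b ^+ (2 ^ n).
Proof.
set Fam := family (fun x => if x \in C t then predT else pred1 b).
have HF : \sum_(f in Fam) prob_fun p f = wt b ^+ (2 ^ n - 2 ^ (n - k)).
  rewrite sum_family.
  rewrite (eq_bigr (fun x => if x \in ~: C t then wt b else 1)); last first.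
    move=> x _; rewrite in_setC; case: (x \in C t) => /=.
      by rewrite big_mkcond big_bool /= /wt addrC subrK.
    by rewrite (big_pred1 b).
  rewrite -big_mkcond prodr_const.
  have -> : #|~: C t| = (2 ^ n - 2 ^ (n - k))%N.
    by rewrite -(card_C t) -card_point -(cardsC (C t)) addKn.
  by [].
have Hcb : prob_fun p ([ffun=> b] : boolfun n) = wt b ^+ (2 ^ n).
  rewrite prob_funE (eq_bigr (fun _ => wt b)); last by move=> x _; rewrite ffunE.
  by rewrite prodr_const card_point.
have FamE : forall f : boolfun n, (f \in Fam) = [forall x, (x \notin C t) ==> (f x == b)].
  move=> f; apply/familyP/forallP => H x; move: (H x); case: (x \in C t) => //=.
set F' := [set f : boolfun n | [forall x, (x \notin C t) ==> (f x == b)]].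
have HF' : \sum_(f in F') prob_fun p f = wt b ^+ (2 ^ n - 2 ^ (n - k)).
  by rewrite -HF; apply: eq_bigl => f; rewrite inE FamE.
rewrite -HF' -Hcb [in RHS](bigD1 [ffun=> b]) /=; last first.
  by rewrite inE; apply/forallP => x; rewrite ffunE eqxx implybT.
rewrite addrC addrK; apply: eq_bigl => f; rewrite !inE.
case fF: [forall x, (x \notin C t) ==> (f x == b)] => //=.
rewrite /nonconstant; apply/idP/idP.
  move=> /existsP[x /existsP[y Hxy]]; apply/eqP => Hf; move: Hxy; rewrite Hf !ffunE eqxx.
  by [].
move=> Hne; have [x Hx] : exists x, f x != b.
  apply/existsP; move: Hne; apply: contraR; rewrite negb_exists => /forallP H.
  by apply/eqP/ffunP => x; rewrite ffunE; apply/eqP; move: (H x); rewrite negbK.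
apply/existsP; exists x; apply/existsP; exists [ffun i => ~~ t i].
move: fF => /forallP /(_ [ffun i => ~~ t i]) /implyP /(_ (notinC t)) /eqP ->.
exact: Hx.
Qed.

End S.

Theorem mainTheorem6 (R : realFieldType) (n k : nat) (p : R) :
  (1 <= n)%N -> 0 <= p -> p <= 1 -> (1 <= k)%N -> (k < n)%N ->
  Prp p (PCm (first_k n k)) =
    2 ^+ k * (p ^+ (2 ^ n - 2 ^ (n - k))%N - p ^+ (2 ^ n)%N) /\
  Prp p (NCm (first_k n k)) =
    2 ^+ k * ((1 - p) ^+ (2 ^ n - 2 ^ (n - k))%N - (1 - p) ^+ (2 ^ n)%N).
Proof.
move=> _ _ _ k1 kn.
have key : forall b, Prp p (S n k b) =
    2 ^+ k * (wt R p b ^+ (2 ^ n - 2 ^ (n - k))%N - wt R p b ^+ (2 ^ n)%N).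
  move=> b; rewrite /Prp sum_S.
  rewrite (eq_bigr (fun _ => wt R p b ^+ (2 ^ n - 2 ^ (n - k))%N - wt R p b ^+ (2 ^ n)%N)).
    by rewrite sumr_const card_T // -[LHS]mulr_natl natrX.
  by move=> t _; rewrite sum_A.
split; [exact: (key true) | exact: (key false)].
Qed.
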